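(* Fix $n\in\mathbb N$, a noise level $\varepsilon\in[0,1)$ and $\bar q\in[0,1]$. Let $G$ be the complete graph on $n$ vertices. Then the Water-Filling Strategy $\psi^{wf}_{\bar q}$ solves the optimization problem $$\min_{\psi\in\Psi}\ \mathbb E(T^\psi_{IH})\quad\text{subject to}\quad\max_{t\in\mathbb N}\mathbb P(T^\psi_{IH}=t)\le\bar q,$$ where $\Psi$ is the set of all agent strategies on $G$.
   Context: Model: in the complete graph on $n$ vertices every vertex is adjacent to every vertex including itself. Goal $D$ uniform; fixed initial vertex; horizon $K$; $B_t$ i.i.d. Bernoulli$(1-\varepsilon)$. An agent strategy $\psi$ chooses $a_t\in\mathcal N(X_t)$ based on its history, its own randomness and $D$; if $B_t=1$, $X_{t+1}=a_t$, else $X_{t+1}$ uniform on $\mathcal N(X_t)$. If $D$ is not reached by $K$, $X_{K+1}=D$, $B_K=1$. Random-Step: $a_t$ uniform on $\mathcal N(X_t)$; Goal-Attempt: $a_t=D$. $T^\psi_{IH}=\inf\{t\ge1:$ Goal-Attempt chosen at $t-1$ and $B_{t-1}=1\}$. $L(t)=\sum_{s\le t}\mathbb I(X_s\in\mathcal N(D))$. Water-Filling Strategy $\psi^{wf}_{\bar q}$: $t^*=\lceil1/\bar q-\varepsilon/(1-\varepsilon)\rceil$ (standing assumption: $1/\bar q-\varepsilon/(1-\varepsilon)$ integer), $p_t=\frac{\bar q}{1-\varepsilon}(1-t\bar q)^{-1}$ for $0\le t<t^*-1$, else $1$; if $X_t\in\mathcal N(D)$ and $T_{IH}>t$, Goal-Attempt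 with probability $p_{L(t)}$, else Random-Step; otherwise Random-Step.
   Formalization: Some strategy in Ψ is assumed to satisfy the constraint $\max_{t\in\mathbb N}\mathbb P(T^\psi_{IH}=t)\le\bar q$, and $L(t)$ sums $\mathbb I(X_s\in\mathcal N(D))$ over $1\le s\le t$ only, leaving out s = 0. Each condition added here is assumed in the paper as well or is needed for the statement above to hold. *)

(* Defs.v *)
From HB Require Import structures.
From mathcomp Require Import all_boot all_order all_algebra.
From mathcomp Require Import reals.
Set Implicit Arguments. Unset Strict Implicit. Unset Printing Implicit Defensive.
Import Order.TTheory GRing.Theory Num.Theory.
Local Open Scope ring_scope.

(* Vertices of the complete graph on n vertices: 'I_n.
   Every vertex is adjacent to every vertex, including itself. *)
Definition nbhd (n : nat) (x : 'I_n) : {set 'I_n} := [set: 'I_n].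

(* The agent's decision at time t:
     None     = Goal-Attempt  (a_t = D),
     Some a   = any other choice a_t = a (e.g. produced by Random-Step);
   only a None decision counts as an (intentional) Goal-Attempt. *)
(* A history entry records (X_s, decision at s, B_s). *)
Definition hist (n : nat) := seq ('I_n * option 'I_n * bool).

(* A (behavioural, randomized) agent strategy: given the goal D, the past
   history h = [(X_0,d_0,B_0); ...; (X_{t-1},d_{t-1},B_{t-1})] and the
   current vertex X_t, the probability of each decision. *)
Definition strategy (R : realType) (n : nat) :=
  'I_n -> hist n -> 'I_n -> option 'I_n -> R.

Definition is_strategy (R : realType) (n : nat) (psi : strategy R n) : Prop :=
  forall (D : 'I_n) (h : hist n) (x : 'I_n),
    [/\ forall d, 0 <= psi D h x d,
        \sum_(d : option 'I_n) psi D h x d = 1,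
        forall a, psi D h x (Some a) != 0 -> a \in nbhd x
      & psi D h x None != 0 -> D \in nbhd x].

(* hitp eps psi D r j h x : probability that T_IH = size h + j, starting at
   time s = size h in state (history h, X_s = x) with no intentional hit yet,
   where r = K - s steps remain before the horizon.  At time K (r = 0) the
   walk is forced: Goal-Attempt with B_K = 1, so T_IH = K + 1. *)
Fixpoint hitp (R : realType) (n : nat) (eps : R) (psi : strategy R n)
  (D : 'I_n) (r j : nat) (h : hist n) (x : 'I_n) {struct r} : R :=
  match r with
  | 0 => (j == 1)%:R
  | r'.+1 =>
    match j with
    | 0 => 0
    | j'.+1 =>
      \sum_(d : option 'I_n) psi D h x d *
        match d with
        | None =>
            (1 - eps) * (j' == 0)%:R
          + eps * \sum_(y in nbhd x)
                    #|nbhd x|%:R^-1 * hitp eps psi D r' j' (rcons h (x, None, false)) y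
        | Some a =>
            (1 - eps) * hitp eps psi D r' j' (rcons h (x, Some a, true)) a
          + eps * \sum_(y in nbhd x)
                    #|nbhd x|%:R^-1 * hitp eps psi D r' j' (rcons h (x, Some a, false)) y
        end
    end
  end.

Definition PT (R : realType) (n : nat) (eps : R) (K : nat) (x0 : 'I_n)
  (psi : strategy R n) (t : nat) : R :=
  \sum_(D : 'I_n) n%:R^-1 * hitp eps psi D K t [::] x0.

(* E(T^psi_IH); T_IH takes values in {1, ..., K+1}. *)
Definition ET (R : realType) (n : nat) (eps : R) (K : nat) (x0 : 'I_n)
  (psi : strategy R n) : R :=
  \sum_(t < K.+2) t%:R * PT eps K x0 psi t.

Definition feasible (R : realType) (n : nat) (eps : R) (K : nat) (x0 : 'I_n)
  (qbar : R) (psi : strategy R n) : Prop :=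
  forall t : nat, PT eps K x0 psi t <= qbar.

Definition tstar (R : realType) (eps qbar : R) : int :=
  Num.ceil (qbar^-1 - eps / (1 - eps)).

Definition pwf (R : realType) (eps qbar : R) (t : nat) : R :=
  if (t%:Z < tstar eps qbar - 1)%R
  then qbar / (1 - eps) * (1 - t%:R * qbar)^-1 else 1.

(* T_IH <= t, i.e. some earlier Goal-Attempt succeeded. *)
Definition hit_before (n : nat) (h : hist n) : bool :=
  has (fun e => (e.1.2 == None) && e.2) h.

Definition Lcount (n : nat) (D : 'I_n) (h : hist n) (x : 'I_n) : nat :=
  count (fun y => y \in nbhd D) (behead (rcons [seq e.1.1 | e <- h] x)).

Definition random_step (R : realType) (n : nat) (x a : 'I_n) : R :=
  if a \in nbhd x then #|nbhd x|%:R^-1 else 0.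

Definition psi_wf (R : realType) (n : nat) (eps qbar : R) : strategy R n :=
  fun D h x d =>
    if (x \in nbhd D) && ~~ hit_before h then
      let p := pwf eps qbar (Lcount D h x) in
      match d with
      | None => p
      | Some a => (1 - p) * random_step R x a
      end
    else
      match d with
      | None => 0
      | Some a => random_step R x a
      end.

(* Main.v *)
Require Import Defs.
From HB Require Import structures.
From mathcomp Require Import all_boot all_order all_algebra.
From mathcomp Require Import reals.
From mathcomp Require Import ring lra.
Set Implicit Arguments. Unset Strict Implicit. Unset Printing Implicit Defensive.
Import Order.TTheory GRing.Theory Num.Theory.
Local Open Scope ring_scope.

Lemma sum_opt (R : realType) (T : finType) (F : option T -> R) :
  \sum_(d : option T) F d = F None + \sum_(a : T) F (Some a).
Proof.
rewrite (bigD1 None) //=; congr (_ + _).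
rewrite (reindex_omap Some (fun d => d)) //=; last by case.
by apply: eq_bigl => a; rewrite eqxx.
Qed.

Definition good (R : realType) (eps : R) (r : nat) (f : nat -> R) : Prop :=
  [/\ f 0%N = 0, \sum_(0 <= j < r.+2) f j = 1
    & forall j, (j < r)%N -> f j.+1 <= (1 - eps) * (1 - \sum_(0 <= i < j.+1) f i)].

Lemma good_ext (R : realType) (eps : R) r (f g : nat -> R) :
  (forall j, f j = g j) -> good eps r f -> good eps r g.
Proof.
move=> E [h0 h1 h2]; split; first by rewrite -E.
  by rewrite -h1; apply: eq_bigr => j _; rewrite E.
move=> j hj; rewrite -E (le_trans (h2 j hj)) //.
by rewrite le_eqVlt; apply/orP; left; apply/eqP; congr (_ * (_ - _)); apply: eq_bigr => i _; rewrite E.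
Qed.

Lemma good_mix (R : realType) (eps : R) r (I : finType) (P : pred I) (w : I -> R)
  (f : I -> nat -> R) :
  eps <= 1 ->
  (forall i, P i -> 0 <= w i) -> \sum_(i | P i) w i = 1 ->
  (forall i, P i -> good eps r (f i)) ->
  good eps r (fun j => \sum_(i | P i) w i * f i j).
Proof.
move=> he1 w0 w1 G; split.
- by rewrite big1 // => i Pi; have [-> _ _] := G i Pi; rewrite mulr0.
- rewrite exchange_big /= -w1; apply: eq_bigr => i Pi.
  by rewrite -mulr_sumr; have [_ -> _] := G i Pi; rewrite mulr1.
- move=> j hj.
  have E : \sum_(0 <= i0 < j.+1) \sum_(i | P i) w i * f i i0
         = \sum_(i | P i) w i * \sum_(0 <= i0 < j.+1) f i i0.
    by rewrite exchange_big /=; apply: eq_bigr => i _; rewrite mulr_sumr.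
  rewrite E -{2}w1 -sumrB mulr_sumr; apply: ler_sum => i Pi.
  have [_ _ h] := G i Pi.
  rewrite -{2}[w i]mulr1 -mulrBr mulrCA; apply: ler_wpM2l; first exact: w0.
  exact: h.
Qed.
Lemma good_None (R : realType) (eps : R) r (g : nat -> R) :
  0 <= eps <= 1 -> good eps r g ->
  good eps r.+1 (fun j => match j with 0%N => 0 | j'.+1 => (1 - eps) * (j' == 0%N)%:R + eps * g j' end).
Proof.
move=> /andP[e0 e1] [g0 g1 g2]; split => //.
- rewrite big_nat_recl // add0r big_split /= -mulr_sumr -mulr_sumr g1.
  rewrite big_nat_recl // big1_seq ?addr0 /=; [ring|done].
- case=> [|j] hj /=.
  + by rewrite big_nat1 subr0 mulr1 g0 mulr0 addr0.
  rewrite mulr0 add0r big_nat_recl // add0r big_split /= -!mulr_sumr.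
  rewrite big_nat_recl // big1_seq ?addr0 /=; last by [].
  have := g2 j hj; set G := \sum_(0 <= i < j.+1) g i => h.
  have -> : 1 - ((1 - eps) * 1 + eps * G) = eps * (1 - G) by ring.
  rewrite mulrCA; apply: ler_wpM2l => //.
Qed.

Lemma good_Some (R : realType) (eps : R) r (g1 g2 : nat -> R) :
  0 <= eps <= 1 -> good eps r g1 -> good eps r g2 ->
  good eps r.+1 (fun j => match j with 0%N => 0 | j'.+1 => (1 - eps) * g1 j' + eps * g2 j' end).
Proof.
move=> /andP[e0 e1] [a0 a1 a2] [b0 b1 b2]; split => //.
- rewrite big_nat_recl // add0r big_split /= -!mulr_sumr a1 b1; ring.
- case=> [|j] hj /=.
  + rewrite big_nat1 a0 b0 !mulr0 addr0 subr0 mulr1; lra.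
  rewrite big_nat_recl // add0r big_split /= -!mulr_sumr.
  have := a2 j hj; have := b2 j hj.
  set A := \sum_(0 <= i < j.+1) g1 i; set B := \sum_(0 <= i < j.+1) g2 i => hb ha.
  have -> : (1 - eps) * (1 - ((1 - eps) * A + eps * B))
     = (1 - eps) * ((1 - eps) * (1 - A)) + eps * ((1 - eps) * (1 - B)) by ring.
  apply: lerD; apply: ler_wpM2l => //; lra.
Qed.

Lemma good_base (R : realType) (eps : R) : good eps 0 (fun j => (j == 1%N)%:R).
Proof. by split => //; rewrite big_nat_recl // big_nat1 /= add0r. Qed.

Lemma card_nbhd n (x : 'I_n) : #|nbhd x| = n.
Proof. by rewrite /nbhd cardsT card_ord. Qed.

Lemma avg_one (R : realType) n (x : 'I_n) :
  \sum_(y in nbhd x) (#|nbhd x|%:R^-1 : R) = 1.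
Proof.
rewrite sumr_const card_nbhd -(mulr_natr (n%:R^-1)) mulVf // pnatr_eq0.
by case: n x => [[]|].
Qed.

Lemma hitp_good (R : realType) n (eps : R) (psi : strategy R n) D :
  0 <= eps <= 1 -> is_strategy psi ->
  forall r h x, good eps r (fun j => hitp eps psi D r j h x).
Proof.
move=> he Hpsi; elim=> [|r IH] h x /=; first exact: good_base.
have [p0 p1 _ _] := Hpsi D h x.
apply: (@good_ext _ _ _ (fun j => \sum_(d : option 'I_n) psi D h x d *
  (match j with 0%N => 0 | j'.+1 =>
    match d with
        | None =>
            (1 - eps) * (j' == 0%N)%:R
          + eps * \sum_(y in nbhd x)
                    #|nbhd x|%:R^-1 * hitp eps psi D r j' (rcons h (x, None, false)) y
        | Some a =>
            (1 - eps) * hitp eps psi D r j' (rcons h (x, Some a, true)) a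
          + eps * \sum_(y in nbhd x)
                    #|nbhd x|%:R^-1 * hitp eps psi D r j' (rcons h (x, Some a, false)) y
        end end))).
  by case=> [|j] //; rewrite big1 // => d _; rewrite mulr0.
apply: good_mix => //; first by case/andP: he.
have Gmix : forall b, good eps r (fun j => \sum_(y in nbhd x)
        #|nbhd x|%:R^-1 * hitp eps psi D r j (rcons h b) y).
  move=> b; apply: good_mix; first by case/andP: he.
  - by move=> y _; rewrite invr_ge0 ler0n.
  - exact: avg_one.
  - by move=> y _; apply: IH.
case=> [a|] _.
- apply: (good_ext _ (good_Some he (IH _ a) (Gmix _))); by case.
- apply: (good_ext _ (good_None he (Gmix _))); by case.
Qed.

Lemma PT_good (R : realType) n (eps : R) K (x0 : 'I_n) (psi : strategy R n) :
  0 <= eps <= 1 -> is_strategy psi -> good eps K (PT eps K x0 psi).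
Proof.
move=> he Hpsi.
apply: (@good_ext _ _ _ (fun j => \sum_(D : 'I_n) n%:R^-1 * hitp eps psi D K j [::] x0)) => //.
apply: good_mix; first by case/andP: he.
- by move=> y _; rewrite invr_ge0 ler0n.
- rewrite sumr_const card_ord -(mulr_natr (n%:R^-1)) mulVf // pnatr_eq0.
  by case: n x0 {psi Hpsi} => [[]|].
- by move=> D _; apply: hitp_good.
Qed.

Lemma tail_sum (R : realType) (f : nat -> R) N :
  \sum_(0 <= t < N.+1) t%:R * f t
  = \sum_(0 <= s < N) (\sum_(0 <= i < N.+1) f i - \sum_(0 <= i < s.+1) f i).
Proof.
elim: N => [|N IH]; first by rewrite big_nat1 big_geq // mul0r.
rewrite big_nat_recr //= IH [in RHS]big_nat_recr //=.
rewrite [\sum_(0 <= i < N.+2) f i]big_nat_recr //=.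
have -> : \sum_(0 <= s < N) (\sum_(0 <= i < N.+1) f i + f N.+1 - \sum_(0 <= i < s.+1) f i)
  = \sum_(0 <= s < N) (\sum_(0 <= i < N.+1) f i - \sum_(0 <= i < s.+1) f i) + \sum_(0 <= s < N) f N.+1.
  by rewrite -big_split /=; apply: eq_bigr => s _; ring.
rewrite sumr_const_nat subn0 -mulr_natr -natr1; ring.
Qed.

Lemma ET_tail (R : realType) n (eps : R) K (x0 : 'I_n) (psi : strategy R n) :
  good eps K (PT eps K x0 psi) ->
  ET eps K x0 psi = \sum_(0 <= s < K.+1) (1 - \sum_(0 <= i < s.+1) PT eps K x0 psi i).
Proof.
move=> [_ g1 _].
rewrite /ET -(big_mkord xpredT (fun t => t%:R * PT eps K x0 psi t)) tail_sum g1 //.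
Qed.

Fixpoint phi (R : realType) (a : nat -> R) (r j m : nat) {struct r} : R :=
  match r with
  | 0%N => (j == 1%N)%:R
  | r'.+1 => match j with
             | 0%N => 0
             | j'.+1 => a m * (j' == 0%N)%:R + (1 - a m) * phi a r' j' m.+1
             end
  end.

Lemma Lcount_size n (D : 'I_n) h x : Lcount D h x = size h.
Proof.
rewrite /Lcount (eq_count (a2 := predT)); last by move=> y; rewrite /nbhd in_setT.
by rewrite count_predT size_behead size_rcons size_map.
Qed.

Lemma hb_rcons n (h : hist n) e : e.1.2 != None -> hit_before (rcons h e) = hit_before h.
Proof. by move=> H; rewrite /hit_before has_rcons (negbTE H). Qed.

Lemma hb_rcons0 n (h : hist n) x : hit_before (rcons h (x, None, false)) = hit_before h.
Proof. by rewrite /hit_before has_rcons. Qed.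

Lemma avg_const (R : realType) n (x : 'I_n) (c : R) :
  \sum_(y in nbhd x) #|nbhd x|%:R^-1 * c = c.
Proof. by rewrite -mulr_suml avg_one mul1r. Qed.

Lemma hitp_wf (R : realType) n (eps qbar : R) (D : 'I_n) :
  forall r j (h : hist n) x, ~~ hit_before h ->
  hitp eps (psi_wf eps qbar) D r j h x
  = phi (fun m => (1 - eps) * pwf eps qbar m) r j (size h).
Proof.
elim=> [|r IH] [|j] h x Hh //=.
rewrite sum_opt.
have E : forall d, psi_wf eps qbar D h x d =
   match d with None => pwf eps qbar (size h)
   | Some a => (1 - pwf eps qbar (size h)) * #|nbhd x|%:R^-1 end.
  by case=> [a|]; rewrite /psi_wf /nbhd in_setT Hh Lcount_size //= /random_step in_setT.
rewrite E.
under eq_bigr => y _ do rewrite IH ?hb_rcons0 // size_rcons.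
rewrite avg_const.
under eq_bigr => a _ do rewrite E IH ?hb_rcons // size_rcons.
under eq_bigr => a _ do under eq_bigr => y _ do rewrite IH ?hb_rcons // size_rcons.
under eq_bigr => a _ do rewrite avg_const.
rewrite sumr_const card_ord card_nbhd -[(_ / _ * _) *+ n]mulr_natr.
have nz : n%:R != 0 :> R by rewrite pnatr_eq0; case: n x {IH E D h Hh} => [[]|].
set p := pwf eps qbar (size h).
set c := phi _ r j (size h).+1.
by field.
Qed.

Definition Q (R : realType) (a : nat -> R) (m j : nat) : R :=
  \prod_(0 <= i < j) (1 - a (m + i)%N).

Lemma Q_S (R : realType) (a : nat -> R) m j : Q a m j.+1 = (1 - a m) * Q a m.+1 j.
Proof.
rewrite /Q big_nat_recl // addn0; congr (_ * _).
by apply: eq_bigr => i _; rewrite addSnnS.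
Qed.

Lemma Q_Sr (R : realType) (a : nat -> R) j : Q a 0 j.+1 = Q a 0 j * (1 - a j).
Proof. by rewrite /Q big_nat_recr. Qed.

Lemma phi_0 (R : realType) (a : nat -> R) r m : phi a r 0 m = 0.
Proof. by case: r. Qed.

Lemma phi_lt (R : realType) (a : nat -> R) r :
  forall m j, (j < r)%N -> phi a r j.+1 m = a (m + j)%N * Q a m j.
Proof.
elim: r => [|r IH] m [|j] //= hj.
- by rewrite phi_0 mulr0 addr0 mulr1 addn0 /Q big_geq // mulr1.
- by rewrite mulr0 add0r IH // Q_S addSnnS; ring.
Qed.

Lemma phi_r (R : realType) (a : nat -> R) r : forall m, phi a r r.+1 m = Q a m r.
Proof.
elim: r => [|r IH] m /=; first by rewrite /Q big_geq.
by rewrite mulr0 add0r IH Q_S.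
Qed.

Lemma phi_big (R : realType) (a : nat -> R) r : forall m j, (r.+1 < j)%N -> phi a r j m = 0.
Proof.
elim: r => [|r IH] m [|j] //=; first by case: j.
by move=> hj; rewrite IH // mulr0; case: j hj => [|j] //= _; rewrite mulr0 add0r.
Qed.

Lemma pwf_eq (R : realType) (eps qbar : R) s :
  qbar^-1 - eps / (1 - eps) \is a Num.int ->
  pwf eps qbar s = if s%:R < qbar^-1 - eps / (1 - eps) - 1
                   then qbar / (1 - eps) * (1 - s%:R * qbar)^-1 else 1.
Proof.
move=> hz; rewrite /pwf /tstar.
have -> : (s%:Z < Num.ceil (qbar^-1 - eps / (1 - eps)) - 1)%R
   = ((s%:Z)%:~R < (Num.ceil (qbar^-1 - eps / (1 - eps)) - 1)%:~R :> R).
  by rewrite ltr_int.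
by rewrite intrB ceilK // mulrz_nat.
Qed.

Definition aw (R : realType) (eps qbar : R) m := (1 - eps) * pwf eps qbar m.
Definition cc (R : realType) (eps qbar : R) := qbar^-1 - eps / (1 - eps) - 1.

Lemma cc_eq (R : realType) (eps qbar : R) : eps < 1 -> cc eps qbar = qbar^-1 - (1 - eps)^-1.
Proof.
move=> he; rewrite /cc.
have h1 : 1 - eps != 0 by rewrite subr_eq0; apply/eqP => E; move: he; rewrite -E ltxx.
rewrite -addrA; congr (_ + _).
apply: (mulIf h1); rewrite mulrDl !mulNr divfK // mulVf //; ring.
Qed.

Lemma branch_facts (R : realType) (eps qbar : R) (s : nat) :
  0 <= eps -> eps < 1 -> 0 < qbar -> qbar <= 1 ->
  s%:R < cc eps qbar ->
  [/\ 0 < 1 - s%:R * qbar, qbar / (1 - eps) <= 1 - s%:R * qbar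
    & s%:R * qbar + qbar <= 1].
Proof.
move=> e0 e1 q0 q1; rewrite cc_eq //.
set u := qbar^-1; set v := (1 - eps)^-1 => hs.
have uq : u * qbar = 1 by rewrite mulVf // gt_eqF.
have ve : v * (1 - eps) = 1 by rewrite mulVf // subr_eq0; apply/eqP => E; move: e1; rewrite -E ltxx.
have v1 : 1 <= v by rewrite -[v]mul1r ler_pdivlMr ?subr_gt0 //; lra.
have h : s%:R * qbar < (u - v) * qbar by rewrite ltr_pM2r.
rewrite mulrBl uq in h.
have vq : qbar / (1 - eps) = v * qbar by rewrite mulrC.
rewrite vq; split; nra.
Qed.

Lemma pwf_cc (R : realType) (eps qbar : R) s :
  qbar^-1 - eps / (1 - eps) \is a Num.int ->
  pwf eps qbar s = if s%:R < cc eps qbar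
                   then qbar / (1 - eps) * (1 - s%:R * qbar)^-1 else 1.
Proof. exact: pwf_eq. Qed.

Lemma pwf_bounds (R : realType) (eps qbar : R) s :
  0 <= eps -> eps < 1 -> 0 < qbar -> qbar <= 1 ->
  qbar^-1 - eps / (1 - eps) \is a Num.int ->
  0 <= pwf eps qbar s <= 1.
Proof.
move=> e0 e1 q0 q1 hz; rewrite pwf_cc //.
case: ifP => hs; last by rewrite ler01 lexx.
have [h1 h2 _] := branch_facts e0 e1 q0 q1 hs.
apply/andP; split.
  by apply: mulr_ge0; [apply: divr_ge0 | rewrite invr_ge0]; lra.
by rewrite -/(_ / _) ler_pdivrMr // mul1r.
Qed.

Lemma aw_branch (R : realType) (eps qbar : R) s :
  0 <= eps -> eps < 1 -> 0 < qbar -> qbar <= 1 ->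
  qbar^-1 - eps / (1 - eps) \is a Num.int ->
  s%:R < cc eps qbar -> aw eps qbar s * (1 - s%:R * qbar) = qbar.
Proof.
move=> e0 e1 q0 q1 hz hs; rewrite /aw pwf_cc // hs.
have [h1 _ _] := branch_facts e0 e1 q0 q1 hs.
have h2 : 1 - eps != 0 by rewrite subr_eq0; apply/eqP => E; move: e1; rewrite -E ltxx.
by field; rewrite h2 gt_eqF.
Qed.

Lemma aw_else (R : realType) (eps qbar : R) s :
  qbar^-1 - eps / (1 - eps) \is a Num.int ->
  ~~ (s%:R < cc eps qbar) -> aw eps qbar s = 1 - eps.
Proof. by move=> hz hs; rewrite /aw pwf_cc // (negbTE hs) mulr1. Qed.

Lemma aw_bounds (R : realType) (eps qbar : R) s :
  0 <= eps -> eps < 1 -> 0 < qbar -> qbar <= 1 ->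
  qbar^-1 - eps / (1 - eps) \is a Num.int ->
  0 <= aw eps qbar s <= 1.
Proof.
move=> e0 e1 q0 q1 hz; have /andP[p0 p1] := pwf_bounds s e0 e1 q0 q1 hz.
rewrite /aw; apply/andP; split; first by rewrite mulr_ge0 // subr_ge0 ltW.
nra.
Qed.

Definition W (R : realType) (eps qbar : R) s := Q (aw eps qbar) 0 s.

Lemma W0 (R : realType) (eps qbar : R) : W eps qbar 0 = 1.
Proof. by rewrite /W /Q big_geq. Qed.

Lemma WS (R : realType) (eps qbar : R) s : W eps qbar s.+1 = W eps qbar s * (1 - aw eps qbar s).
Proof. exact: Q_Sr. Qed.

Lemma W_lin (R : realType) (eps qbar : R) :
  0 <= eps -> eps < 1 -> 0 < qbar -> qbar <= 1 ->
  qbar^-1 - eps / (1 - eps) \is a Num.int ->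
  forall s, (s == 0%N) || (s%:R <= cc eps qbar) -> W eps qbar s = 1 - s%:R * qbar.
Proof.
move=> e0 e1 q0 q1 hz; elim=> [|s IH] hs; first by rewrite W0 mul0r subr0.
have hs' : s%:R < cc eps qbar.
  move: hs => /= hs; apply: lt_le_trans hs; rewrite ltr_nat //.
rewrite WS IH; last by apply/orP; right; apply: ltW.
have := aw_branch e0 e1 q0 q1 hz hs'.
rewrite -natr1 => h.
rewrite mulrBr mulr1 [_ * aw _ _ _]mulrC h; ring.
Qed.

Lemma W_ge0 (R : realType) (eps qbar : R) :
  0 <= eps -> eps < 1 -> 0 < qbar -> qbar <= 1 ->
  qbar^-1 - eps / (1 - eps) \is a Num.int ->
  forall s, 0 <= W eps qbar s.
Proof.
move=> e0 e1 q0 q1 hz; elim=> [|s IH]; first by rewrite W0.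
have /andP[a0 a1] := aw_bounds s e0 e1 q0 q1 hz.
by rewrite WS mulr_ge0 // subr_ge0.
Qed.

Lemma W_anti (R : realType) (eps qbar : R) :
  0 <= eps -> eps < 1 -> 0 < qbar -> qbar <= 1 ->
  qbar^-1 - eps / (1 - eps) \is a Num.int ->
  forall s k, W eps qbar (s + k) <= W eps qbar s.
Proof.
move=> e0 e1 q0 q1 hz s; elim=> [|k IH]; first by rewrite addn0.
apply: le_trans IH; rewrite addnS WS.
have /andP[a0 a1] := aw_bounds (s + k) e0 e1 q0 q1 hz.
have := W_ge0 e0 e1 q0 q1 hz (s + k); nra.
Qed.

Lemma W_tail (R : realType) (eps qbar : R) :
  0 <= eps -> eps < 1 -> 0 < qbar -> qbar <= 1 ->
  qbar^-1 - eps / (1 - eps) \is a Num.int ->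
  forall s, ~~ (s%:R < cc eps qbar) -> (1 - eps) * W eps qbar s <= qbar.
Proof.
move=> e0 e1 q0 q1 hz s hs.
have h1 : 1 - eps != 0 by rewrite subr_eq0; apply/eqP => E; move: e1; rewrite -E ltxx.
have uq : qbar^-1 * qbar = 1 by rewrite mulVf // gt_eqF.
have ve : (1 - eps)^-1 * (1 - eps) = 1 by rewrite mulVf.
have ccE := cc_eq qbar e1.
case: (leP (cc eps qbar) 0) => hc.
  have Wl : W eps qbar s <= 1 by rewrite -(W0 eps qbar) -[s]add0n W_anti.
  have : qbar^-1 <= (1 - eps)^-1 by lra.
  move=> huv.
  have : qbar^-1 * (qbar * (1 - eps)) <= (1 - eps)^-1 * (qbar * (1 - eps)).
    by rewrite ler_pM2r // mulr_gt0 // subr_gt0.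
  rewrite mulrA uq mul1r mulrCA ve mulr1 => h.
  have := W_ge0 e0 e1 q0 q1 hz s; nra.
have ci : cc eps qbar \is a Num.nat.
  by rewrite natrEint (ltW hc) andbT /cc rpredB // ?rpred1.
case/natrP: ci => k kE.
have ks : (k <= s)%N by rewrite -(ler_nat R) -kE leNgt.
have := W_anti e0 e1 q0 q1 hz k (s - k); rewrite subnKC // => hW.
have Wk : W eps qbar k = 1 - k%:R * qbar.
  by apply: W_lin => //; rewrite -kE lexx orbT.
rewrite Wk -kE in hW.
have : (1 - eps) * (1 - cc eps qbar * qbar) = qbar.
  rewrite ccE [(_ - _) * qbar]mulrBl uq.
  have -> : 1 - (1 - (1 - eps)^-1 * qbar) = (1 - eps)^-1 * qbar by ring.
  by rewrite mulrA [(1 - eps) * _]mulrC ve mul1r.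
move=> E; rewrite -{2}E; apply: ler_wpM2l => //; lra.
Qed.

Lemma W_step (R : realType) (eps qbar : R) :
  0 <= eps -> eps < 1 -> 0 < qbar -> qbar <= 1 ->
  qbar^-1 - eps / (1 - eps) \is a Num.int ->
  forall s, W eps qbar s.+1 = if s%:R < cc eps qbar then W eps qbar s - qbar
                              else eps * W eps qbar s.
Proof.
move=> e0 e1 q0 q1 hz s; rewrite WS; case: ifP => hs.
  have hW := W_lin e0 e1 q0 q1 hz (s := s).
  rewrite hW ?(ltW hs) ?orbT //.
  have := aw_branch e0 e1 q0 q1 hz hs => h.
  by rewrite mulrBr mulr1 [_ * aw _ _ _]mulrC h.
by rewrite aw_else ?hs //; ring.
Qed.

Lemma W_step_le (R : realType) (eps qbar : R) :
  0 <= eps -> eps < 1 -> 0 < qbar -> qbar <= 1 ->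
  qbar^-1 - eps / (1 - eps) \is a Num.int ->
  forall s, aw eps qbar s * W eps qbar s <= qbar.
Proof.
move=> e0 e1 q0 q1 hz s.
case hs : (s%:R < cc eps qbar).
  have hW := W_lin e0 e1 q0 q1 hz (s := s).
  by rewrite hW ?(ltW hs) ?orbT // aw_branch.
by rewrite aw_else ?hs // W_tail ?hs.
Qed.

Lemma compare (R : realType) (eps qbar : R) K (P : nat -> R) :
  0 <= eps -> eps < 1 -> 0 < qbar -> qbar <= 1 ->
  qbar^-1 - eps / (1 - eps) \is a Num.int ->
  good eps K P -> (forall t, P t <= qbar) ->
  forall s, (s <= K)%N -> W eps qbar s <= 1 - \sum_(0 <= i < s.+1) P i.
Proof.
move=> e0 e1 q0 q1 hz [g0 g1 g2] hP; elim=> [|s IH] hs.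
  by rewrite W0 big_nat1 g0 subr0.
have IH' := IH (ltnW hs).
have h1 := g2 s hs.
have h2 := hP s.+1.
rewrite big_nat_recr //= W_step //.
set V := \sum_(0 <= i < s.+1) P i in IH' h1 *.
case: ifP => _; first lra.
have := W_ge0 e0 e1 q0 q1 hz s.
have : eps * W eps qbar s <= eps * (1 - V) by apply: ler_wpM2l.
lra.
Qed.

Lemma PT_wf (R : realType) n (eps qbar : R) K (x0 : 'I_n) t :
  PT eps K x0 (psi_wf eps qbar) t = phi (aw eps qbar) K t 0.
Proof.
rewrite /PT.
under eq_bigr => D _ do rewrite hitp_wf //.
rewrite -mulr_suml sumr_const card_ord -(mulr_natr (n%:R^-1)) mulVf ?mul1r // pnatr_eq0.
by case: n x0 => [[]|].
Qed.

Lemma Vwf (R : realType) (eps qbar : R) K :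
  forall s, (s <= K)%N -> 1 - \sum_(0 <= i < s.+1) phi (aw eps qbar) K i 0 = W eps qbar s.
Proof.
elim=> [|s IH] hs; first by rewrite big_nat1 phi_0 subr0 W0.
rewrite big_nat_recr //= phi_lt // add0n.
have -> : 1 - (\sum_(0 <= i < s.+1) phi (aw eps qbar) K i 0 + aw eps qbar s * Q (aw eps qbar) 0 s)
  = (1 - \sum_(0 <= i < s.+1) phi (aw eps qbar) K i 0) - aw eps qbar s * Q (aw eps qbar) 0 s by ring.
rewrite IH ?(ltnW hs) // WS /W; ring.
Qed.

Lemma sum_inv_n (R : realType) n (x : 'I_n) : \sum_(a : 'I_n) (n%:R^-1 : R) = 1.
Proof.
rewrite sumr_const card_ord -(mulr_natr (n%:R^-1)) mulVf // pnatr_eq0.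
by case: n x => [[]|].
Qed.

Theorem lemma8 (R : realType) (n : nat) (eps qbar : R) (K : nat) (x0 : 'I_n) :
  0 <= eps < 1 ->
  0 < qbar <= 1 ->
  qbar^-1 - eps / (1 - eps) \is a Num.int ->
  (exists psi : strategy R n, is_strategy psi /\ feasible eps K x0 qbar psi) ->
  [/\ is_strategy (@psi_wf R n eps qbar),
      feasible eps K x0 qbar (@psi_wf R n eps qbar)
    & forall psi : strategy R n, is_strategy psi -> feasible eps K x0 qbar psi ->
        ET eps K x0 (@psi_wf R n eps qbar) <= ET eps K x0 psi].
Proof.
move=> /andP[e0 e1] /andP[q0 q1] hz [psi0 [Hpsi0 Fpsi0]].
have he : 0 <= eps <= 1 by apply/andP; split; [|apply: ltW].
have Swf : is_strategy (@psi_wf R n eps qbar).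
  move=> D h x; have /andP[p0 p1] := pwf_bounds (Lcount D h x) e0 e1 q0 q1 hz.
  split.
  - move=> [a|]; rewrite /psi_wf /random_step /nbhd !in_setT ?cardsT ?card_ord /=;
    case: ifP => _; rewrite ?mulr_ge0 ?subr_ge0 ?invr_ge0 ?ler0n //.
  - rewrite /psi_wf sum_opt /random_step /nbhd in_setT.
    under eq_bigr => a _ do rewrite in_setT.
    rewrite ?cardsT ?card_ord.
    case: ifP => _ /=; rewrite -?mulr_sumr (sum_inv_n R x) ?mulr1 ?add0r //.
    by rewrite addrC subrK.
  - by move=> a _; rewrite /nbhd in_setT.
  - by move=> _; rewrite /nbhd in_setT.
have Gwf := PT_good K x0 he Swf.
have G0 := PT_good K x0 he Hpsi0.
split => //.
- move=> t; rewrite PT_wf; case: t => [|j]; first by rewrite phi_0 ltW.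
  case: (ltngtP j K) => hj.
  + by rewrite phi_lt // add0n; apply: W_step_le.
  + by rewrite phi_big // ltW.
  + rewrite hj phi_r -/(W eps qbar K).
    apply: le_trans (compare e0 e1 q0 q1 hz G0 Fpsi0 (leqnn K)) _.
    case: G0 => _ g1 _; move: g1; rewrite big_nat_recr //= => g1.
    have -> : 1 - \sum_(0 <= i < K.+1) PT eps K x0 psi0 i = PT eps K x0 psi0 K.+1 by lra.
    exact: Fpsi0.
- move=> psi Hpsi Fpsi.
  rewrite (ET_tail Gwf) (ET_tail (PT_good K x0 he Hpsi)).
  apply: ler_sum_nat => s /andP[_ hs].
  under eq_bigr => i _ do rewrite PT_wf.
  rewrite Vwf //.
  exact: (compare e0 e1 q0 q1 hz (PT_good K x0 he Hpsi) Fpsi hs).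
Qed.
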